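(* Let $\lambda\in(1,\infty)\setminus\mathbb{N}$ and let $\phi:[0,1]\to(0,1]$ be a non-increasing function with $\phi(0)=1$ (so that $\omega(x)=\phi(|x|)$ for $|x|\le1$, $\omega(x)=0$ otherwise, is positive on its support $[-1,1]$). Then the subdivision scheme $S_{1,\mathbf{w}^\lambda}$ is uniformly convergent.
   Context: Put $w^\lambda_m=\phi(|m|/\lambda)$ for $m\in\mathbb{Z}$ with $|m|<\lambda$, and for $i\in\{0,1\}$ let $M_i=\{m\in\mathbb{Z}: m\equiv i \pmod 2,\ |m|<\lambda\}$. The scheme $S_{1,\mathbf{w}^\lambda}$ is the weighted local polynomial regression scheme of degree $1$: $(S\mathbf{f})_{2j+i}=\hat p(0)$ where $\hat p$ minimizes $\sum_{m\in M_i} w^\lambda_m (f_{j+(m+i)/2}-p(m))^2$ over polynomials $p$ of degree at most $1$ (it coincides with the degree-$0$ scheme). Explicitly, for $\mathbf{f}=(f_j)_{j\in\mathbb{Z}}$, $i\in\{0,1\}$, $j\in\mathbb{Z}$, \[ (S_{1,\mathbf{w}^\lambda}\mathbf{f})_{2j+i}=\frac{\sum_{m\in M_i} w^\lambda_m f_{j+(m+i)/2}}{\sum_{m\in M_i} w^\lambda_m}. \] Uniform convergence: for every bounded real sequence $\mathbf{f}^0$ there is a continuous $F$ with $\lim_{k\to\infty}\sup_j|(S^k\mathbf{f}^0)_j-F(2^{-k}j)|=0$. *)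

(* Defs.v *)
From Stdlib Require Import Reals ZArith List Lra Lia.
Open Scope R_scope.

(* Weight w^lambda_m = phi(|m|/lambda) (only used for |m| < lambda). *)
Definition wlam (lam : R) (phi : R -> R) (m : Z) : R :=
  phi (IZR (Z.abs m) / lam).

Definition ltb_abs (lam : R) (m : Z) : bool :=
  if Rlt_dec (IZR (Z.abs m)) lam then true else false.

(* Candidate integers -K .. K with K = up lam > lam (contains every m with |m| < lam). *)
Definition candidates (lam : R) : list Z :=
  let K := up lam in
  map (fun k : nat => (Z.of_nat k - K)%Z) (seq 0 (Z.to_nat (2 * K + 1))).

Definition Mset (lam : R) (i : Z) : list Z :=
  filter (fun m => andb (Z.eqb (Z.modulo m 2) i) (ltb_abs lam m)) (candidates lam).

Definition sumR (l : list R) : R := fold_right Rplus 0 l.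

Definition S1 (lam : R) (phi : R -> R) (f : Z -> R) (n : Z) : R :=
  let j := Z.div n 2 in
  let i := Z.modulo n 2 in
  sumR (map (fun m => wlam lam phi m * f (j + Z.div (m + i) 2)%Z) (Mset lam i))
  / sumR (map (wlam lam phi) (Mset lam i)).

Definition S1_iter (lam : R) (phi : R -> R) (k : nat) (f : Z -> R) : Z -> R :=
  Nat.iter k (S1 lam phi) f.

Definition uniformly_convergent (S : (Z -> R) -> (Z -> R)) : Prop :=
  forall f0 : Z -> R,
    (exists B : R, forall j : Z, Rabs (f0 j) <= B) ->
    exists F : R -> R, continuity F /\
      forall eps : R, eps > 0 -> exists K : nat, forall k : nat, (k >= K)%nat ->
        forall j : Z, Rabs (Nat.iter k S f0 j - F (IZR j / 2 ^ k)) <= eps.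

(* Main.v *)
Require Import Defs.
From Stdlib Require Import Reals ZArith List Lra Lia.
Open Scope R_scope.

Lemma Rabs_le_iff a b : Rabs a <= b <-> -b <= a <= b.
Proof. unfold Rabs; destruct Rcase_abs; split; intros; lra. Qed.

Lemma sumR_nonneg (l : list Z) (g : Z -> R) :
  (forall m, In m l -> 0 <= g m) -> 0 <= sumR (map g l).
Proof.
  induction l as [|a l IH]; simpl; intros H; [lra|].
  assert (0 <= g a) by (apply H; left; reflexivity).
  assert (0 <= sumR (map g l)) by (apply IH; intros; apply H; right; assumption). lra.
Qed.

Lemma sumR_ge_elem (l : list Z) (g : Z -> R) m0 :
  (forall m, In m l -> 0 <= g m) -> In m0 l -> g m0 <= sumR (map g l).
Proof.
  induction l as [|a l IH]; simpl; intros Hpos Hin; [contradiction|].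
  assert (0 <= sumR (map g l)) by (apply sumR_nonneg; intros; apply Hpos; right; assumption).
  assert (0 <= g a) by (apply Hpos; left; reflexivity).
  destruct Hin as [<-|Hin].
  - lra.
  - assert (g m0 <= sumR (map g l)) by (apply IH; auto). lra.
Qed.

Lemma sumR_lin1 (l : list Z) (w x : Z -> R) c :
  sumR (map (fun m => w m * (x m - c)) l) = sumR (map (fun m => w m * x m) l) - c * sumR (map w l).
Proof. induction l as [|a l IH]; simpl; [ring|]. rewrite IH; ring. Qed.

Lemma sumR_lin2 (l : list Z) (w x : Z -> R) c :
  sumR (map (fun m => w m * (c - x m)) l) = c * sumR (map w l) - sumR (map (fun m => w m * x m) l).
Proof. induction l as [|a l IH]; simpl; [ring|]. rewrite IH; ring. Qed.

Lemma sumR_le_len (l : list Z) (g : Z -> R) :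
  (forall m, In m l -> g m <= 1) -> sumR (map g l) <= INR (length l).
Proof.
  induction l as [|a l IH]; intros H; simpl sumR; [simpl; lra|].
  assert (g a <= 1) by (apply H; left; reflexivity).
  assert (sumR (map g l) <= INR (length l)) by (apply IH; intros; apply H; right; assumption).
  change (length (a :: l)) with (S (length l)). rewrite S_INR. simpl sumR. lra.
Qed.

Lemma convex_bound (l : list Z) (w x : Z -> R) lo D m0 :
  (forall m, In m l -> 0 <= w m) ->
  (forall m, In m l -> lo <= x m <= lo + D) ->
  In m0 l -> 0 < w m0 ->
  lo + (w m0 / sumR (map w l)) * (x m0 - lo) <= sumR (map (fun m => w m * x m) l) / sumR (map w l)
  <= lo + D - (w m0 / sumR (map w l)) * (lo + D - x m0).
Proof.
  intros Hw Hx Hin Hpos.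
  assert (Hs : w m0 <= sumR (map w l)) by (apply sumR_ge_elem; auto).
  assert (H1 : w m0 * (x m0 - lo) <= sumR (map (fun m => w m * (x m - lo)) l)).
  { apply (sumR_ge_elem l (fun m => w m * (x m - lo))); auto.
    intros m Hm. specialize (Hw m Hm). specialize (Hx m Hm). nra. }
  assert (H2 : w m0 * (lo + D - x m0) <= sumR (map (fun m => w m * (lo + D - x m)) l)).
  { apply (sumR_ge_elem l (fun m => w m * (lo + D - x m))); auto.
    intros m Hm. specialize (Hw m Hm). specialize (Hx m Hm). nra. }
  rewrite sumR_lin1 in H1. rewrite sumR_lin2 in H2.
  set (s := sumR (map w l)) in *.
  set (T := sumR (map (fun m => w m * x m) l)) in *.
  assert (Hs0 : 0 < s) by lra.
  split.
  - apply Rmult_le_reg_r with s; [lra|].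
    replace ((lo + w m0 / s * (x m0 - lo)) * s) with (lo * s + w m0 * (x m0 - lo)) by (field; lra).
    replace (T / s * s) with T by (field; lra). lra.
  - apply Rmult_le_reg_r with s; [lra|].
    replace ((lo + D - w m0 / s * (lo + D - x m0)) * s) with ((lo + D) * s - w m0 * (lo + D - x m0)) by (field; lra).
    replace (T / s * s) with T by (field; lra). lra.
Qed.

Lemma geo_tail (u : nat -> R) a g :
  0 <= a -> 0 <= g < 1 -> (forall k, Rabs (u (S k) - u k) <= a * g ^ k) ->
  forall k d, Rabs (u (k + d)%nat - u k) <= a / (1 - g) * g ^ k * (1 - g ^ d).
Proof.
  intros Ha Hg Hs k d. induction d as [|d IH].
  - rewrite Nat.add_0_r. unfold Rminus at 1. rewrite Rplus_opp_r, Rabs_R0. simpl. lra.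
  - replace (k + S d)%nat with (S (k + d)) by lia.
    assert (Ht := Rabs_triang (u (S (k + d)) - u (k + d)%nat) (u (k + d)%nat - u k)).
    replace (u (S (k + d)) - u (k + d)%nat + (u (k + d)%nat - u k)) with (u (S (k + d)) - u k) in Ht by ring.
    specialize (Hs (k + d)%nat). rewrite pow_add in Hs.
    assert (E : a / (1 - g) * g ^ k * (1 - g ^ S d) = a / (1 - g) * g ^ k * (1 - g ^ d) + a * (g ^ k * g ^ d)).
    { simpl. field. lra. }
    rewrite E. lra.
Qed.

Lemma geo_tail' (u : nat -> R) a g :
  0 <= a -> 0 <= g < 1 -> (forall k, Rabs (u (S k) - u k) <= a * g ^ k) ->
  forall k d, Rabs (u (k + d)%nat - u k) <= a / (1 - g) * g ^ k.
Proof.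
  intros Ha Hg Hs k d. pose proof (geo_tail u a g Ha Hg Hs k d) as H.
  assert (0 <= a / (1 - g) * g ^ k).
  { apply Rmult_le_pos; [apply Rmult_le_pos; [lra| apply Rlt_le, Rinv_0_lt_compat; lra] | apply pow_le; lra]. }
  assert (0 <= g ^ d) by (apply pow_le; lra). nra.
Qed.

Lemma geo_limit (u : nat -> R) a g :
  0 <= a -> 0 <= g < 1 -> (forall k, Rabs (u (S k) - u k) <= a * g ^ k) ->
  {l | forall k, Rabs (l - u k) <= a / (1 - g) * g ^ k}.
Proof.
  intros Ha Hg Hs.
  set (C := a / (1 - g)).
  assert (HC : 0 <= C) by (apply Rmult_le_pos; [lra| apply Rlt_le, Rinv_0_lt_compat; lra]).
  assert (Ht := geo_tail' u a g Ha Hg Hs).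
  assert (Hc : Cauchy_crit u).
  { intros eps Heps.
    assert (Hg1 : Rabs g < 1) by (rewrite Rabs_right; lra).
    destruct (pow_lt_1_zero g Hg1 (eps / (2 * C + 1))) as [N HN].
    { apply Rdiv_lt_0_compat; lra. }
    exists N. intros n m Hn Hm. unfold R_dist.
    specialize (HN N (le_n N)). rewrite Rabs_right in HN by (apply Rle_ge, pow_le; lra).
    assert (H1 := Ht N (n - N)%nat). assert (H2 := Ht N (m - N)%nat).
    replace (N + (n - N))%nat with n in H1 by lia.
    replace (N + (m - N))%nat with m in H2 by lia.
    assert (Hlt : (2 * C + 1) * g ^ N < eps).
    { apply Rmult_lt_reg_r with (/ (2 * C + 1)).
      - apply Rinv_0_lt_compat; lra.
      - replace ((2 * C + 1) * g ^ N * / (2 * C + 1)) with (g ^ N) by (field; lra). exact HN. }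
    assert (0 <= g ^ N) by (apply pow_le; lra).
    assert (Ht3 := Rabs_triang (u n - u N) (u N - u m)).
    replace (u n - u N + (u N - u m)) with (u n - u m) in Ht3 by ring.
    rewrite <- Rabs_Ropp in H2. replace (- (u m - u N)) with (u N - u m) in H2 by ring.
    fold C in H1, H2. nra. }
  destruct (R_complete u Hc) as [l Hl]. exists l. intros k.
  destruct (Rle_or_lt (Rabs (l - u k)) (C * g ^ k)) as [H|H]; [exact H|exfalso].
  destruct (Hl (Rabs (l - u k) - C * g ^ k)) as [N HN]; [lra|].
  specialize (HN (k + N)%nat ltac:(lia)). unfold R_dist in HN.
  specialize (Ht k N).
  assert (Ht3 := Rabs_triang (l - u (k + N)%nat) (u (k + N)%nat - u k)).
  replace (l - u (k + N)%nat + (u (k + N)%nat - u k)) with (l - u k) in Ht3 by ring.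
  rewrite <- Rabs_Ropp in HN. replace (- (u (k + N)%nat - l)) with (l - u (k + N)%nat) in HN by ring.
  fold C in Ht. lra.
Qed.
Definition Nn (lam : R) : Z := (up lam - 1)%Z.
Definition Ww (lam : R) : Z := (2 * Nn lam - 1)%Z.
Definition Pst (lam : R) (J : Z) : Z := ((J - Nn lam + 1) / 2)%Z.
Definition delta (lam : R) (phi : R -> R) : R := phi 1 / INR (length (candidates lam)).

Lemma N_facts lam : 1 < lam -> (forall n : nat, lam <> INR n) ->
  (1 <= Nn lam)%Z /\ IZR (Nn lam) < lam /\ lam < IZR (Nn lam) + 1.
Proof.
  intros H1 H2. destruct (archimed lam) as [A B]. unfold Nn.
  rewrite minus_IZR.
  assert (Hpos : (0 < up lam - 1)%Z).
  { apply lt_IZR. rewrite minus_IZR. simpl. lra. }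
  assert (IZR (up lam) - 1 <> lam).
  { intro E. apply (H2 (Z.to_nat (up lam - 1))). rewrite INR_IZR_INZ, Z2Nat.id by lia.
    rewrite minus_IZR. simpl. lra. }
  repeat split; try lra. lia.
Qed.

Lemma abs_lt_iff lam m : 1 < lam -> (forall n : nat, lam <> INR n) ->
  (IZR (Z.abs m) < lam <-> (Z.abs m <= Nn lam)%Z).
Proof.
  intros H1 H2. destruct (N_facts lam H1 H2) as [A [B C]]. split; intro H.
  - assert (Z.abs m < Nn lam + 1)%Z; [|lia].
    apply lt_IZR. rewrite plus_IZR. simpl. lra.
  - apply IZR_le in H. lra.
Qed.

Lemma ltb_abs_iff lam m : ltb_abs lam m = true <-> IZR (Z.abs m) < lam.
Proof. unfold ltb_abs. destruct Rlt_dec; split; intros; congruence. Qed.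

Lemma in_candidates lam m : IZR (Z.abs m) < lam -> In m (candidates lam).
Proof.
  intro H. destruct (archimed lam) as [A _].
  assert (Hm : (Z.abs m < up lam)%Z) by (apply lt_IZR; lra).
  unfold candidates. apply in_map_iff. exists (Z.to_nat (m + up lam)).
  split.
  - rewrite Z2Nat.id by lia. lia.
  - apply in_seq. lia.
Qed.

Lemma in_Mset lam i m : In m (Mset lam i) <-> (m mod 2 = i)%Z /\ IZR (Z.abs m) < lam.
Proof.
  unfold Mset. rewrite filter_In, Bool.andb_true_iff, Z.eqb_eq, ltb_abs_iff.
  split; [tauto|]. intros [A B]. split; [apply in_candidates; auto| tauto].
Qed.

Lemma w_bounds lam phi m : 1 < lam ->
  (forall x : R, 0 <= x <= 1 -> 0 < phi x <= 1) ->
  (forall x y : R, 0 <= x -> x <= y -> y <= 1 -> phi y <= phi x) ->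
  IZR (Z.abs m) < lam -> 0 < phi 1 <= wlam lam phi m /\ wlam lam phi m <= 1.
Proof.
  intros Hl Hp Hn H. unfold wlam.
  assert (H0 : 0 <= IZR (Z.abs m)) by (apply IZR_le; lia).
  set (t := IZR (Z.abs m) / lam).
  assert (Et : t * lam = IZR (Z.abs m)) by (unfold t; field; lra).
  assert (0 <= t <= 1) by nra.
  destruct (Hp 1 ltac:(lra)). destruct (Hp t ltac:(lra)).
  assert (phi 1 <= phi t) by (apply Hn; lra).
  lra.
Qed.

Lemma delta_facts lam phi : 1 < lam ->
  (forall x : R, 0 <= x <= 1 -> 0 < phi x <= 1) ->
  0 < delta lam phi <= 1 /\ 1 <= INR (length (candidates lam)).
Proof.
  intros Hl Hp. unfold delta.
  assert (Hin : In 0%Z (candidates lam)) by (apply in_candidates; simpl; lra).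
  assert (HL : 1 <= INR (length (candidates lam))).
  { destruct (candidates lam); [contradiction|]. simpl length. rewrite S_INR.
    assert (0 <= INR (length l)) by apply pos_INR. lra. }
  destruct (Hp 1 ltac:(lra)).
  split; [|exact HL]. split.
  - apply Rdiv_lt_0_compat; lra.
  - unfold Rdiv. assert (/ INR (length (candidates lam)) <= 1).
    { rewrite <- Rinv_1. apply Rinv_le_contravar; lra. }
    assert (0 <= / INR (length (candidates lam))) by (apply Rlt_le, Rinv_0_lt_compat; lra).
    nra.
Qed.
Lemma window_step lam phi
  (Hlam1 : 1 < lam)
  (Hlam_nat : forall n : nat, lam <> INR n)
  (Hphi_pos : forall x : R, 0 <= x <= 1 -> 0 < phi x <= 1)
  (Hphi_noninc : forall x y : R, 0 <= x -> x <= y -> y <= 1 -> phi y <= phi x)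
  (f : Z -> R) lo D J :
  (forall p, (Pst lam J <= p <= Pst lam J + Ww lam)%Z -> lo <= f p <= lo + D) ->
  forall n, (J <= n <= J + Ww lam)%Z ->
  0 <= f ((J + Nn lam) / 2)%Z - lo <= D /\
  lo + delta lam phi * (f ((J + Nn lam) / 2)%Z - lo) <= S1 lam phi f n
  <= lo + D - delta lam phi * (D - (f ((J + Nn lam) / 2)%Z - lo)).
Proof.
  intros Hf n Hn.
  destruct (N_facts lam Hlam1 Hlam_nat) as [HN1 [HN2 HN3]].
  destruct (delta_facts lam phi Hlam1 Hphi_pos) as [[Hd0 Hd1] HL].
  unfold Pst, Ww in *.
  set (N := Nn lam) in *.
  set (p0 := ((J + N) / 2)%Z) in *.
  unfold S1. cbv zeta.
  set (i := (n mod 2)%Z).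
  set (m0 := (2 * p0 - n)%Z).
  set (l := Mset lam i).
  set (x := fun m => f (n / 2 + (m + i) / 2)%Z).
  assert (Hm0 : In m0 l).
  { unfold l. apply in_Mset. split.
    - unfold m0, i. clearbody p0. Z.div_mod_to_equations. lia.
    - apply (abs_lt_iff lam m0 Hlam1 Hlam_nat). fold N. unfold m0, p0. clearbody N.
      Z.div_mod_to_equations. lia. }
  assert (Hidx : (n / 2 + (m0 + i) / 2 = p0)%Z).
  { unfold m0, i, p0. clearbody N. Z.div_mod_to_equations. lia. }
  assert (Hx : forall m, In m l -> lo <= x m <= lo + D).
  { intros m Hm. unfold l in Hm. apply in_Mset in Hm. destruct Hm as [Hm1 Hm2].
    apply (abs_lt_iff lam m Hlam1 Hlam_nat) in Hm2. fold N in Hm2.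
    unfold x. apply Hf. unfold i in *. clearbody N. Z.div_mod_to_equations. lia. }
  assert (Hw : forall m, In m l -> 0 <= wlam lam phi m).
  { intros m Hm. unfold l in Hm. apply in_Mset in Hm.
    destruct (w_bounds lam phi m Hlam1 Hphi_pos Hphi_noninc (proj2 Hm)). lra. }
  assert (Hw0 : phi 1 <= wlam lam phi m0).
  { unfold l in Hm0. apply in_Mset in Hm0.
    destruct (w_bounds lam phi m0 Hlam1 Hphi_pos Hphi_noninc (proj2 Hm0)). lra. }
  destruct (Hphi_pos 1 ltac:(lra)) as [Hp1 _].
  assert (He := Hx m0 Hm0). unfold x in He. rewrite Hidx in He.
  assert (Hc := convex_bound l (wlam lam phi) x lo D m0 Hw Hx Hm0 ltac:(lra)).
  assert (Hxm0 : x m0 = f p0) by (unfold x; rewrite Hidx; reflexivity).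
  rewrite Hxm0 in Hc.
  set (s := sumR (map (wlam lam phi) l)) in *.
  assert (Hs : wlam lam phi m0 <= s) by (apply sumR_ge_elem; auto).
  assert (HsL : s <= INR (length (candidates lam))).
  { apply Rle_trans with (INR (length l)).
    - apply sumR_le_len. intros m Hm. unfold l in Hm. apply in_Mset in Hm.
      destruct (w_bounds lam phi m Hlam1 Hphi_pos Hphi_noninc (proj2 Hm)). lra.
    - apply le_INR. unfold l, Mset. apply filter_length_le. }
  assert (Hrho : delta lam phi <= wlam lam phi m0 / s).
  { unfold delta, Rdiv. apply Rmult_le_compat; try lra.
    - apply Rlt_le, Rinv_0_lt_compat; lra.
    - apply Rinv_le_contravar; lra. }
  set (rho := wlam lam phi m0 / s) in *.
  set (e := f p0 - lo) in *.
  replace (lo + D - f p0) with (D - e) in Hc by (unfold e; ring).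
  assert (He' : 0 <= e <= D) by (unfold e; lra).
  assert (0 <= (rho - delta lam phi) * e) by (apply Rmult_le_pos; lra).
  assert (0 <= (rho - delta lam phi) * (D - e)) by (apply Rmult_le_pos; lra).
  split; [lra|].
  change (lo + delta lam phi * e <= sumR (map (fun m => wlam lam phi m * x m) l) / s <= lo + D - delta lam phi * (D - e)).
  set (T := sumR (map (fun m => wlam lam phi m * x m) l) / s) in *.
  split; nra.
Qed.
Definition Inv (lam : R) (f : Z -> R) (D : R) : Prop :=
  forall J, exists lo, forall p, (J <= p <= J + Ww lam)%Z -> lo <= f p <= lo + D.


Lemma Inv_step lam phi
  (Hlam1 : 1 < lam)
  (Hlam_nat : forall n : nat, lam <> INR n)
  (Hphi_pos : forall x : R, 0 <= x <= 1 -> 0 < phi x <= 1)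
  (Hphi_noninc : forall x y : R, 0 <= x -> x <= y -> y <= 1 -> phi y <= phi x)
  f D : Inv lam f D -> Inv lam (S1 lam phi f) ((1 - delta lam phi) * D).
Proof.
  intros H J. destruct (H (Pst lam J)) as [lo Hlo].
  exists (lo + delta lam phi * (f ((J + Nn lam) / 2)%Z - lo)).
  intros n Hn.
  destruct (window_step lam phi Hlam1 Hlam_nat Hphi_pos Hphi_noninc f lo D J Hlo n Hn) as [He [H1 H2]].
  split; nra.
Qed.

Lemma Inv_close lam phi
  (Hlam1 : 1 < lam)
  (Hlam_nat : forall n : nat, lam <> INR n)
  (Hphi_pos : forall x : R, 0 <= x <= 1 -> 0 < phi x <= 1)
  (Hphi_noninc : forall x y : R, 0 <= x -> x <= y -> y <= 1 -> phi y <= phi x)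
  f D : Inv lam f D -> forall n, Rabs (S1 lam phi f n - f (n / 2)%Z) <= D.
Proof.
  intros H n. destruct (H (Pst lam n)) as [lo Hlo].
  destruct (N_facts lam Hlam1 Hlam_nat) as [HN1 _].
  destruct (delta_facts lam phi Hlam1 Hphi_pos) as [[Hd0 Hd1] _].
  assert (Hn : (n <= n <= n + Ww lam)%Z) by (unfold Ww; lia).
  destruct (window_step lam phi Hlam1 Hlam_nat Hphi_pos Hphi_noninc f lo D n Hlo n Hn) as [He [H1 H2]].
  assert (Hm : lo <= f (n / 2)%Z <= lo + D).
  { apply Hlo. unfold Pst, Ww. clear -HN1. set (N := Nn lam) in *. clearbody N.
    Z.div_mod_to_equations. lia. }
  apply Rabs_le_iff. nra.
Qed.

Lemma Inv_adj lam f D : 1 < lam -> (forall n : nat, lam <> INR n) -> Inv lam f D ->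
  forall p q, (Z.abs (p - q) <= 1)%Z -> Rabs (f p - f q) <= D.
Proof.
  intros H1 H2 H p q Hpq. destruct (N_facts lam H1 H2) as [HN1 _].
  destruct (H (Z.min p q)) as [lo Hlo].
  assert (A := Hlo p ltac:(unfold Ww; lia)). assert (B := Hlo q ltac:(unfold Ww; lia)).
  apply Rabs_le_iff. lra.
Qed.

Lemma Int_part_double r : (Int_part (2 * r) / 2 = Int_part r)%Z.
Proof.
  destruct (base_Int_part r) as [A B]. destruct (base_Int_part (2 * r)) as [C D].
  assert (E1 : (2 * Int_part r < Int_part (2 * r) + 1)%Z).
  { apply lt_IZR. rewrite mult_IZR, plus_IZR. simpl. lra. }
  assert (E2 : (Int_part (2 * r) < 2 * Int_part r + 2)%Z).
  { apply lt_IZR. rewrite plus_IZR, mult_IZR. simpl. lra. }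
  Z.div_mod_to_equations. lia.
Qed.

Lemma Int_part_close r s : Rabs (r - s) < 1 -> (Z.abs (Int_part r - Int_part s) <= 1)%Z.
Proof.
  intros H. apply Rabs_def2 in H. destruct H as [H H'].
  destruct (base_Int_part r) as [A B]. destruct (base_Int_part s) as [C D].
  assert (E1 : (Int_part r < Int_part s + 2)%Z).
  { apply lt_IZR. rewrite plus_IZR. simpl. lra. }
  assert (E2 : (Int_part s < Int_part r + 2)%Z).
  { apply lt_IZR. rewrite plus_IZR. simpl. lra. }
  lia.
Qed.

Lemma pow_le_1 g d : 0 <= g <= 1 -> g ^ d <= 1.
Proof.
  intros H. induction d; simpl; [lra|].
  assert (0 <= g ^ d) by (apply pow_le; lra). nra.
Qed.

Theorem corollary4p2 (lam : R) (phi : R -> R)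
  (Hlam1 : 1 < lam)
  (Hlam_nat : forall n : nat, lam <> INR n)
  (Hphi_pos : forall x : R, 0 <= x <= 1 -> 0 < phi x <= 1)
  (Hphi_noninc : forall x y : R, 0 <= x -> x <= y -> y <= 1 -> phi y <= phi x)
  (Hphi0 : phi 0 = 1) :
  uniformly_convergent (S1 lam phi).
Proof.
  intros f0 [B HB].
  assert (HB0 : 0 <= B) by (specialize (HB 0%Z); pose proof (Rabs_pos (f0 0%Z)); lra).
  destruct (delta_facts lam phi Hlam1 Hphi_pos) as [[Hd0 Hd1] _].
  set (g := 1 - delta lam phi).
  assert (Hg : 0 <= g < 1) by (unfold g; lra).
  set (D0 := 2 * B).
  set (fk := fun k => Nat.iter k (S1 lam phi) f0).
  assert (Hinv : forall k, Inv lam (fk k) (D0 * g ^ k)).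
  { induction k as [|k IH].
    - intros J. exists (- B). intros p _. specialize (HB p). apply Rabs_le_iff in HB.
      unfold fk, D0. simpl. lra.
    - replace (D0 * g ^ S k) with ((1 - delta lam phi) * (D0 * g ^ k)) by (unfold g; simpl; ring).
      exact (Inv_step lam phi Hlam1 Hlam_nat Hphi_pos Hphi_noninc _ _ IH). }
  set (u := fun x k => fk k (Int_part (2 ^ k * x))).
  assert (Hstep : forall x k, Rabs (u x (S k) - u x k) <= D0 * g ^ k).
  { intros x k. unfold u.
    replace (2 ^ S k * x) with (2 * (2 ^ k * x)) by (simpl; ring).
    rewrite <- (Int_part_double (2 ^ k * x)).
    change (fk (S k)) with (S1 lam phi (fk k)).
    apply (Inv_close lam phi Hlam1 Hlam_nat Hphi_pos Hphi_noninc _ _ (Hinv k)). }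
  assert (HD0 : 0 <= D0) by (unfold D0; lra).
  set (F := fun x => proj1_sig (geo_limit (u x) D0 g HD0 Hg (Hstep x))).
  assert (HF : forall x k, Rabs (F x - u x k) <= D0 / (1 - g) * g ^ k).
  { intros x k. unfold F. destruct (geo_limit (u x) D0 g HD0 Hg (Hstep x)) as [l Hl]. simpl. apply Hl. }
  set (C := D0 / (1 - g)) in *.
  assert (HC : D0 <= C).
  { unfold C. replace (1 - g) with (delta lam phi) by (unfold g; ring).
    unfold Rdiv. rewrite <- (Rmult_1_r D0) at 1. apply Rmult_le_compat_l; [lra|].
    rewrite <- Rinv_1. apply Rinv_le_contravar; lra. }
  assert (Hg1 : Rabs g < 1) by (rewrite Rabs_right; lra).
  exists F. split.
  - intros x. unfold continuity_pt, continue_in, limit1_in, limit_in.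
    intros eps Heps.
    destruct (pow_lt_1_zero g Hg1 (eps / (3 * C + 1))) as [k Hk].
    { apply Rdiv_lt_0_compat; lra. }
    specialize (Hk k (le_n k)). rewrite Rabs_right in Hk by (apply Rle_ge, pow_le; lra).
    assert (H2k : 0 < 2 ^ k) by (apply pow_lt; lra).
    exists (/ 2 ^ k). split; [apply Rinv_0_lt_compat; lra|].
    intros y [_ Hy]. simpl in Hy |- *. unfold R_dist in Hy |- *.
    assert (Hc : Rabs (2 ^ k * y - 2 ^ k * x) < 1).
    { replace (2 ^ k * y - 2 ^ k * x) with (2 ^ k * (y - x)) by ring.
      rewrite Rabs_mult, (Rabs_right (2 ^ k)) by lra.
      apply Rmult_lt_reg_r with (/ 2 ^ k); [apply Rinv_0_lt_compat; lra|].
      replace (2 ^ k * Rabs (y - x) * / 2 ^ k) with (Rabs (y - x)) by (field; lra). lra. }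
    apply Int_part_close in Hc.
    assert (Ha := Inv_adj lam _ _ Hlam1 Hlam_nat (Hinv k) _ _ Hc).
    assert (Hy1 := HF y k). assert (Hx1 := HF x k).
    assert (Hlt : (3 * C + 1) * g ^ k < eps).
    { apply Rmult_lt_reg_r with (/ (3 * C + 1)).
      - apply Rinv_0_lt_compat; lra.
      - replace ((3 * C + 1) * g ^ k * / (3 * C + 1)) with (g ^ k) by (field; lra). exact Hk. }
    assert (0 <= g ^ k) by (apply pow_le; lra).
    unfold u in Hy1, Hx1.
    apply Rabs_le_iff in Hy1. apply Rabs_le_iff in Hx1. apply Rabs_le_iff in Ha.
    apply Rabs_def1; nra.
  - intros eps Heps.
    assert (HC0 : 0 <= C) by lra.
    destruct (pow_lt_1_zero g Hg1 (eps / (C + 1))) as [K HK].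
    { apply Rdiv_lt_0_compat; lra. }
    specialize (HK K (le_n K)). rewrite Rabs_right in HK by (apply Rle_ge, pow_le; lra).
    exists K. intros k Hk j.
    assert (H2k : 0 < 2 ^ k) by (apply pow_lt; lra).
    specialize (HF (IZR j / 2 ^ k) k). unfold u in HF.
    replace (2 ^ k * (IZR j / 2 ^ k)) with (IZR j) in HF by (field; lra).
    rewrite <- (Int_part_spec (IZR j) j) in HF by lra.
    change (fk k j) with (Nat.iter k (S1 lam phi) f0 j) in HF.
    rewrite Rabs_minus_sym.
    assert (Hgk : g ^ k <= g ^ K).
    { replace k with (K + (k - K))%nat by lia. rewrite pow_add.
      assert (g ^ (k - K) <= 1) by (apply pow_le_1; lra).
      assert (0 <= g ^ K) by (apply pow_le; lra).
      assert (0 <= g ^ (k - K)) by (apply pow_le; lra). nra. }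
    assert (Hlt : (C + 1) * g ^ K < eps).
    { apply Rmult_lt_reg_r with (/ (C + 1)).
      - apply Rinv_0_lt_compat; lra.
      - replace ((C + 1) * g ^ K * / (C + 1)) with (g ^ K) by (field; lra). exact HK. }
    assert (0 <= g ^ k) by (apply pow_le; lra).
    nra.
Qed.
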